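(* Let $\alpha:M_s\to M_s$ be completely positive with $\alpha(I)\le I$. Suppose: (i) there is no projection $p$ with $0<p<I$ and $\alpha(p)\ge p$; (ii) there exists $n\ge0$ with $\alpha^{n+1}(I)=\alpha^n(I)=:v$; (iii) $v$ is positive definite (has full support). Then $\alpha(I)=I$.
   Context: $M_s$ is the algebra of complex $s\times s$ matrices with the positive semidefinite order; $\alpha^0=\mathrm{id}$. *)

(* Defs.v *)
(* Complex numbers are R[i] = complex R for a real closed
   field R (this includes the classical complex numbers, R = reals). *)
From HB Require Import structures.
From mathcomp Require Import all_boot all_order all_algebra.
From mathcomp Require Export complex.
Set Implicit Arguments. Unset Strict Implicit. Unset Printing Implicit Defensive.
Import Order.TTheory GRing.Theory Num.Theory.
Local Open Scope ring_scope.

Definition adjmx (C : numClosedFieldType) (m n : nat) (A : 'M[C]_(m, n)) : 'M[C]_(n, m) :=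
  (map_mx Num.conj A)^T.

Definition psdmx (C : numClosedFieldType) (n : nat) (A : 'M[C]_n) : Prop :=
  adjmx A = A /\ forall x : 'cV[C]_n, 0 <= (adjmx x *m A *m x) 0 0.

Definition mxle (C : numClosedFieldType) (n : nat) (A B : 'M[C]_n) : Prop :=
  psdmx (B - A).

Definition is_projection (C : numClosedFieldType) (n : nat) (p : 'M[C]_n) : Prop :=
  adjmx p = p /\ p *m p = p.

Definition posdefmx (C : numClosedFieldType) (n : nat) (A : 'M[C]_n) : Prop :=
  psdmx A /\ A \in unitmx.

(* completely positive: for every k, id_{M_k} (x) alpha maps positive
   elements of M_k(M_s) (k x k block matrices with s x s blocks) to
   positive elements *)
Definition completely_positive (C : numClosedFieldType) (s : nat)
    (alpha : 'M[C]_s -> 'M[C]_s) : Prop :=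
  forall (k : nat) (B : 'I_k -> 'I_k -> 'M[C]_s),
    psdmx (\mxblock_(i < k, j < k) B i j) ->
    psdmx (\mxblock_(i < k, j < k) alpha (B i j)).

(* Main.v *)
Require Import Defs.
From HB Require Import structures.
From mathcomp Require Import all_boot all_order all_algebra.
From mathcomp Require Import complex.
From mathcomp Require Import ring.
Import Order.TTheory GRing.Theory Num.Theory.
Local Open Scope ring_scope.

Set Implicit Arguments. Unset Strict Implicit. Unset Printing Implicit Defensive.

Section Helpers.
Variable C : numClosedFieldType.

Lemma adjmxM m n p (A : 'M[C]_(m, n)) (B : 'M[C]_(n, p)) :
  adjmx (A *m B) = adjmx B *m adjmx A.
Proof. by rewrite /adjmx map_mxM trmx_mul. Qed.

Lemma adjmxD m n (A B : 'M[C]_(m, n)) : adjmx (A + B) = adjmx A + adjmx B.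
Proof. by rewrite /adjmx map_mxD linearD. Qed.

Lemma adjmxN m n (A : 'M[C]_(m, n)) : adjmx (- A) = - adjmx A.
Proof. by rewrite /adjmx map_mxN linearN. Qed.

Lemma adjmxB m n (A B : 'M[C]_(m, n)) : adjmx (A - B) = adjmx A - adjmx B.
Proof. by rewrite adjmxD adjmxN. Qed.

Lemma adjmxZ m n a (A : 'M[C]_(m, n)) : adjmx (a *: A) = a^* *: adjmx A.
Proof. by apply/matrixP => i j; rewrite !mxE rmorphM. Qed.

Lemma adjmxK m n (A : 'M[C]_(m, n)) : adjmx (adjmx A) = A.
Proof. by apply/matrixP => i j; rewrite !mxE conjCK. Qed.

Lemma adjmx_diag n (d : 'rV[C]_n) : adjmx (diag_mx d) = diag_mx (map_mx Num.conj d).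
Proof. by rewrite /adjmx map_diag_mx tr_diag_mx. Qed.

Lemma adjmx1 n : adjmx (1%:M : 'M[C]_n) = 1%:M.
Proof. by apply/matrixP => i j; rewrite !mxE conjC_nat eq_sym. Qed.

Lemma adjmx0 m n : adjmx (0 : 'M[C]_(m, n)) = 0.
Proof. by apply/matrixP => i j; rewrite !mxE conjC0. Qed.

Lemma mxE_add m n (A B : 'M[C]_(m, n)) i j : (A + B) i j = A i j + B i j.
Proof. by rewrite mxE. Qed.
Lemma mxE_opp m n (A : 'M[C]_(m, n)) i j : (- A) i j = - A i j.
Proof. by rewrite mxE. Qed.
Lemma mxE_sub m n (A B : 'M[C]_(m, n)) i j : (A - B) i j = A i j - B i j.
Proof. by rewrite mxE_add mxE_opp. Qed.
Lemma mxE_scale m n a (A : 'M[C]_(m, n)) i j : (a *: A) i j = a * A i j.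
Proof. by rewrite mxE. Qed.

Definition Q n (A : 'M[C]_n) (x : 'cV[C]_n) := (adjmx x *m A *m x) 0 0.

Lemma QD n (A B : 'M[C]_n) x : Q (A + B) x = Q A x + Q B x.
Proof. by rewrite /Q mulmxDr mulmxDl mxE_add. Qed.
Lemma QN n (A : 'M[C]_n) x : Q (- A) x = - Q A x.
Proof. by rewrite /Q mulmxN mulNmx mxE_opp. Qed.
Lemma QB n (A B : 'M[C]_n) x : Q (A - B) x = Q A x - Q B x.
Proof. by rewrite QD QN. Qed.
Lemma QZ n a (A : 'M[C]_n) x : Q (a *: A) x = a * Q A x.
Proof. by rewrite /Q -scalemxAr -scalemxAl mxE_scale. Qed.

Lemma psdP n (A : 'M[C]_n) : psdmx A -> forall x, 0 <= Q A x.
Proof. by case. Qed.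

Lemma psdD n (A B : 'M[C]_n) : psdmx A -> psdmx B -> psdmx (A + B).
Proof.
move=> [hA qA] [hB qB]; split; first by rewrite adjmxD hA hB.
by move=> x; change (0 <= Q (A + B) x); rewrite QD addr_ge0 ?qA ?qB.
Qed.

Lemma psdZ n a (A : 'M[C]_n) : 0 <= a -> psdmx A -> psdmx (a *: A).
Proof.
move=> a0 [hA qA]; split; first by rewrite adjmxZ geC0_conj // hA.
by move=> x; change (0 <= Q (a *: A) x); rewrite QZ mulr_ge0 ?qA.
Qed.

Lemma psd0 n : psdmx (0 : 'M[C]_n).
Proof.
split; first exact: adjmx0.
by move=> x; rewrite mulmx0 mul0mx mxE.
Qed.

Lemma psd_conj n (M A : 'M[C]_n) : psdmx A -> psdmx (adjmx M *m A *m M).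
Proof.
move=> [hA qA]; split; first by rewrite !adjmxM adjmxK hA mulmxA.
move=> x; have := qA (M *m x).
by rewrite adjmxM !mulmxA.
Qed.

Lemma Q_diag n (d : 'rV[C]_n) x :
  Q (diag_mx d) x = \sum_i d 0 i * (x i 0 * (x i 0)^*).
Proof.
rewrite /Q mul_mx_diag !mxE; apply: eq_bigr => i _.
by rewrite !mxE [_ * d 0 i]mulrC -mulrA [(x i 0)^* * _]mulrC.
Qed.

Lemma psd_diag n (d : 'rV[C]_n) : (forall i, 0 <= d 0 i) -> psdmx (diag_mx d).
Proof.
move=> d0; split.
  rewrite adjmx_diag; congr diag_mx; apply/rowP => i; rewrite !mxE.
  exact: geC0_conj.
by move=> x; change (0 <= Q (diag_mx d) x); rewrite Q_diag; apply: sumr_ge0 => i _;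
  rewrite mulr_ge0 ?mul_conjC_ge0.
Qed.


Lemma psd1 n : psdmx (1%:M : 'M[C]_n).
Proof. by rewrite -diag_const_mx; apply: psd_diag => i; rewrite mxE ler01. Qed.

Lemma norm_ge0 n (y : 'cV[C]_n) : 0 <= (adjmx y *m y) 0 0.
Proof. by have := psdP (psd1 n) y; rewrite /Q mulmx1. Qed.

Lemma norm_eq0 n (y : 'cV[C]_n) : (adjmx y *m y) 0 0 = 0 -> y = 0.
Proof.
rewrite mxE => h.
have hge : forall i, predT i -> 0 <= adjmx y 0 i * y i 0.
  by move=> i _; rewrite !mxE mulrC mul_conjC_ge0.
have h2 := psumr_eq0P hge h.
apply/matrixP => i j; rewrite ord1 [RHS]mxE.
by have := h2 i isT; rewrite !mxE mulrC => /eqP; rewrite mul_conjC_eq0 => /eqP.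
Qed.

Lemma psd_Q0 n (A : 'M[C]_n) x : psdmx A -> Q A x = 0 -> A *m x = 0.
Proof.
move=> [hA qA] q0; set y := A *m x.
set k := (adjmx y *m y) 0 0; set a := Q A y.
have k0 : 0 <= k := norm_ge0 y.
have a0 : 0 <= a := qA y.
have hy : adjmx x *m A = adjmx y by rewrite /y adjmxM hA.
have e1 : (adjmx x *m A *m x) 0 0 = 0 by exact: q0.
have e2 : (adjmx x *m A *m y) 0 0 = k by rewrite hy.
have e3 : (adjmx y *m A *m x) 0 0 = k by rewrite -mulmxA.
have e4 : (adjmx y *m A *m y) 0 0 = a by [].
have := qA ((a + 1) *: x - k *: y).
rewrite adjmxB !adjmxZ !geC0_conj ?addr_ge0 ?ler01 //.
rewrite !(mulmxBl, mulmxBr) -!scalemxAl -!scalemxAr !(mxE_sub, mxE_scale) e1 e2 e3 e4.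
have -> : (a + 1) * ((a + 1) * 0) - k * ((a + 1) * k) -
  ((a + 1) * (k * k) - k * (k * a))
   = - (k * k * (a + 2)) by ring.
rewrite oppr_ge0 => h.
have hk : k * k * (a + 2) = 0.
  apply: le_anti; rewrite h /= mulr_ge0 ?addr_ge0 ?mulr_ge0 ?ler0n //.
move: hk => /eqP; rewrite !mulf_eq0 orbb => /orP [/eqP|].
  by move/norm_eq0.
move=> /eqP ha2; have : 0 < a + 2 by rewrite ltr_wpDl ?ltr0n.
by rewrite ha2 ltxx.
Qed.

Lemma quad_W n (W M : 'M[C]_n) i : adjmx W *m W = 1%:M ->
  Q (W *m M *m adjmx W) (W *m delta_mx i 0) = M i i.
Proof.
move=> hW; rewrite /Q adjmxM !mulmxA -!(mulmxA _ (adjmx W) W) hW !mulmx1.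
have -> : adjmx (delta_mx i 0 : 'cV[C]_n) = delta_mx 0 i.
  by apply/matrixP => a b; rewrite !mxE conjC_nat andbC.
by rewrite -rowE -colE !mxE.
Qed.

End Helpers.

Lemma psd_cast (C : numClosedFieldType) m n (e : m = n) (A : 'M[C]_m) :
  psdmx A -> psdmx (castmx (e, e) A).
Proof. by case: n / e; rewrite castmx_id. Qed.

Lemma cp_pos (C : numClosedFieldType) s (alpha : 'M[C]_s -> 'M[C]_s) :
  completely_positive alpha -> forall A, psdmx A -> psdmx (alpha A).
Proof.
move=> cp A hA.
have e : (\sum_(i < 1) s)%N = s := big_ord1 _ (fun=> s).
have h1 : psdmx (\mxblock_(i < 1, j < 1) A).
  have -> : (\mxblock_(i < 1, j < 1) A) = castmx (esym e, esym e) A.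
    by rewrite {2}(mxEmxblock A) castmx_comp castmx_id.
  exact: psd_cast.
have h2 := cp 1%N (fun _ _ => A) h1.
rewrite (mxEmxblock (alpha A)); exact: psd_cast.
Qed.


Section W.
Variable C : numClosedFieldType.

Lemma Q0x n (A : 'M[C]_n) : Q A 0 = 0.
Proof. by rewrite /Q mulmx0 mxE. Qed.

Lemma Q0 n (x : 'cV[C]_n) : Q 0 x = 0.
Proof. by rewrite /Q mulmx0 mul0mx mxE. Qed.

Lemma cols0 m n (M : 'M[C]_(m, n)) : (forall j, M *m (delta_mx j (0 : 'I_1)) = 0) -> M = 0.
Proof.
move=> h; apply/matrixP => i j; have /matrixP/(_ i 0) := h j.
by rewrite -colE mxE => ->; rewrite !mxE.
Qed.

Lemma diagB n (d1 d2 : 'rV[C]_n) : diag_mx d1 - diag_mx d2 = diag_mx (d1 - d2).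
Proof. by apply/matrixP => i j; rewrite !mxE mulrnBl. Qed.

Lemma max_exists n (d : 'rV[C]_n) : (forall i, 0 <= d 0 i <= 1) ->
  exists c : C, [/\ 0 <= c, c < 1 & forall i, d 0 i != 1 -> d 0 i <= c].
Proof.
move=> hd.
suff [c [c0 c1 hc]] : exists c : C, [/\ 0 <= c, c < 1 &
    forall i, i \in enum 'I_n -> d 0 i != 1 -> d 0 i <= c].
  by exists c; split => // i; apply: hc; rewrite mem_enum.
elim: (enum 'I_n) => [|i r [c [c0 c1 hc]]].
  by exists 0; split => //; rewrite ltr01.
have /andP [di0 di1] := hd i.
have [e1|ne1] := eqVneq (d 0 i) 1.
  exists c; split => // k; rewrite inE => /orP [/eqP -> |]; first by rewrite e1 eqxx.
  exact: hc.
have dlt : d 0 i < 1 by rewrite lt_neqAle ne1 di1.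
have [dle|dgt] := boolP (d 0 i <= c).
  exists c; split => // k; rewrite inE => /orP [/eqP -> //|]; exact: hc.
have cd : c <= d 0 i.
  have := real_leVge (ger0_real c0) (ger0_real di0).
  by rewrite (negbTE dgt) orbF.
exists (d 0 i); split => // k; rewrite inE => /orP [/eqP -> //|] kr hk.
exact: le_trans (hc k kr hk) cd.
Qed.

End W.

Lemma main_lemma (C : numClosedFieldType) (s : nat)
    (alpha : {linear 'M[C]_s -> 'M[C]_s}) :
  completely_positive alpha ->
  mxle (alpha 1%:M) 1%:M ->
  (forall p : 'M[C]_s, is_projection p -> p <> 0 -> p <> 1%:M ->
     ~ mxle p (alpha p)) ->
  (exists n : nat, iter n.+1 alpha 1%:M = iter n alpha 1%:M /\
                   posdefmx (iter n alpha 1%:M)) ->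
  alpha 1%:M = 1%:M.
Proof.
move=> cp hI hproj [n [hfix [hv hvu]]].
set v := iter n alpha 1%:M in hfix hv hvu.
have av : alpha v = v := hfix.
have pos := cp_pos cp.
have hv1 : psdmx (1%:M - v).
  rewrite /v; elim: n {v av hfix hv hvu} => [|k ih]; first by rewrite subrr; exact: psd0.
  have -> : 1%:M - iter k.+1 alpha 1%:M
      = (1%:M - alpha 1%:M) + alpha (1%:M - iter k alpha 1%:M).
    by rewrite linearB /= addrA subrK.
  exact: psdD hI (pos _ ih).
have vn : v \is normalmx.
  apply/normalmxP; have -> : map_mx Num.conj (v^T) = v.
    by have := hv.1; rewrite /adjmx map_trmx.
  by [].
have vE := orthomx_spectralP vn.
set U := spectralmx v in vE; set d := spectral_diag v in vE.
set W := invmx U in vE.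
have Uu : U \in unitmx := spectral_unit v.
have adjW : adjmx W = U.
  rewrite /W invmx_unitary ?spectral_unitarymx //.
  by rewrite -map_trmx -/(adjmx U) adjmxK.
have hW1 : adjmx W *m W = 1%:M by rewrite adjW mulmxV.
have hW2 : W *m adjmx W = 1%:M by rewrite adjW mulVmx.
rewrite -adjW in vE.
clearbody U W d.
have QW M i : Q (W *m M *m adjmx W) (W *m delta_mx i 0) = M i i := quad_W M i hW1.
have W1 : W *m 1%:M *m adjmx W = 1%:M by rewrite mulmx1 hW2.
have Q1 i : Q 1%:M (W *m delta_mx i 0) = 1.
  by rewrite -{1}W1 QW mxE eqxx.
have Qv i : Q v (W *m delta_mx i 0) = d 0 i.
  by rewrite vE QW mxE eqxx.
have hd i : 0 <= d 0 i <= 1.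
  rewrite -Qv psdP //= -subr_ge0 -[X in X - _](Q1 i) -QB; exact: psdP.
have WB X Y : W *m X *m adjmx W - W *m Y *m adjmx W = W *m (X - Y) *m adjmx W.
  by rewrite mulmxBr mulmxBl.
have WM X Y : (W *m X *m adjmx W) *m (W *m Y *m adjmx W) = W *m (X *m Y) *m adjmx W.
  by rewrite (mulmxA W X Y) !mulmxA -(mulmxA _ (adjmx W) W) hW1 mulmx1.
have psdW (e : 'rV_s) : (forall i, 0 <= e 0 i) -> psdmx (W *m diag_mx e *m adjmx W).
  by move=> he; have := psd_conj (adjmx W) (psd_diag he); rewrite adjmxK.
have [all1|/forallPn [i0 hi0]] := boolP [forall i, d 0 i == 1].
  have v1 : v = 1%:M.
    have dc : d = const_mx 1.
      by apply/rowP => i; rewrite mxE; apply/eqP; move/forallP: all1.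
    by rewrite vE dc diag_const_mx W1.
  by rewrite v1 in av.
have [c [c0 c1 hc]] := max_exists hd.
set b : 'rV[C]_s := \row_i ((d 0 i == 1)%:R).
set p := W *m diag_mx b *m adjmx W.
have Qp i : Q p (W *m delta_mx i 0) = b 0 i by rewrite QW mxE eqxx.
have hb i : 0 <= b 0 i by rewrite mxE ler0n.
have [/existsP [j hj]|no1] := boolP [exists j, d 0 j == 1]; last first.
  move/existsPn: no1 => no1.
  have hcv : psdmx (c *: 1%:M - v).
    have -> : c *: 1%:M - v = W *m diag_mx (\row_i (c - d 0 i)) *m adjmx W.
      have -> : diag_mx (\row_i (c - d 0 i)) = c *: 1%:M - diag_mx d.
        by apply/matrixP => k l; rewrite !mxE; case: (k == l) => /=; ring.
      rewrite mulmxBr mulmxBl -vE -scalemxAr -scalemxAl.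
      by rewrite W1.
    by apply: psdW => i; rewrite mxE subr_ge0; apply: hc; exact: no1.
  have it k : psdmx (c *: iter k alpha 1%:M - v).
    elim: k => [//|k ih].
    have -> : c *: iter k.+1 alpha 1%:M - v = alpha (c *: iter k alpha 1%:M - v).
      by rewrite linearB linearZ /= av.
    exact: pos.
  have dpos : 0 < d 0 i0.
    have /andP [hd0 _] := hd i0.
    rewrite lt_def hd0 andbT; apply/eqP => d0.
    have : v *m (W *m delta_mx i0 (0 : 'I_1)) = 0.
      rewrite vE -!mulmxA (mulmxA (adjmx W) W) hW1 mul1mx.
      have -> : diag_mx d *m delta_mx i0 (0 : 'I_1) = 0.
        apply/matrixP => k l; rewrite mul_diag_mx !mxE.
        by case: eqP => [->|_]; rewrite /= ?d0 ?mul0r ?mulr0.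
      by rewrite !mulmx0.
    move/(congr1 (mulmx (invmx v))); rewrite mulKmx // mulmx0 => e0.
    by have := Q1 i0; rewrite e0 Q0x => /eqP; rewrite eq_sym oner_eq0.
  have := psdP (it n) (W *m delta_mx i0 0); rewrite -/v QB QZ Qv.
  have -> : c * d 0 i0 - d 0 i0 = - ((1 - c) * d 0 i0) by ring.
  by rewrite oppr_ge0 (lt_geF (mulr_gt0 _ dpos)) // subr_gt0.
exfalso.
have padj : adjmx p = p.
  rewrite /p !adjmxM adjmxK adjmx_diag mulmxA; congr (_ *m diag_mx _ *m _).
  by apply/rowP => i; rewrite !mxE conjC_nat.
have hpp : p *m p = p.
  have bb : \row_j (b 0 j * b 0 j) = b.
    by apply/rowP => i; rewrite !mxE; case: (d 0 i == 1); rewrite ?mulr1 ?mulr0.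
  by rewrite /p WM mulmx_diag bb.
apply: (hproj p).
- by split.
- move=> p0; have := Qp j; rewrite p0 Q0 mxE hj => /eqP; by rewrite eq_sym oner_eq0.
- by move=> p1; have := Qp i0; rewrite p1 Q1 mxE (negbTE hi0) => /eqP; rewrite oner_eq0.
set a := alpha p.
have psdp : psdmx p := psdW b hb.
have h1p : psdmx (1%:M - p).
  rewrite -{1}W1 /p WB -diag_const_mx diagB; apply: psdW => i.
  by rewrite !mxE; case: (_ == 1); rewrite ?subrr ?subr0 ?ler01.
have h1a : psdmx (1%:M - a).
  have -> : 1%:M - a = (1%:M - alpha 1%:M) + alpha (1%:M - p).
    by rewrite linearB /= addrA subrK.
  exact: psdD hI (pos _ h1p).
have aadj : adjmx a = a.
  have := h1a.1; rewrite adjmxB adjmx1 => /(congr1 (fun X => 1%:M - X)).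
  by rewrite !subKr.
have vp : v *m p = p.
  have db : \row_j (d 0 j * b 0 j) = b.
    by apply/rowP => i; rewrite !mxE; case: eqP => [->|_]; rewrite ?mulr1 ?mulr0.
  by rewrite vE /p WM mulmx_diag db.
have sAr := fun (k : C) (A B : 'M[C]_s) => esym (scalemxAr k A B).
have sAl := fun (k : C) (A B : 'M[C]_s) => esym (scalemxAl k A B).
have decomp : p + c *: (1%:M - p) - v =
    W *m diag_mx (\row_i (b 0 i + c * (1 - b 0 i) - d 0 i)) *m adjmx W.
  have -> : diag_mx (\row_i (b 0 i + c * (1 - b 0 i) - d 0 i))
      = diag_mx b + c *: (1%:M - diag_mx b) - diag_mx d.
    apply/matrixP => k l; rewrite !mxE; case: (k == l) => /=; ring.
  rewrite !(mulmxDr, mulmxDl, mulmxBr, mulmxBl, sAr, sAl).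
  by rewrite !(mulmxN, mulNmx) W1 -vE.
have key x : Q (1%:M - a) (p *m x) = 0.
  set u := p *m x.
  have vu : v *m u = u by rewrite /u mulmxA vp.
  have Qvu : Q v u = Q 1%:M u by rewrite /Q -mulmxA vu mulmx1.
  have H1 : 0 <= Q (alpha (p + c *: (1%:M - p) - v)) u.
    apply/psdP/pos; rewrite decomp; apply: psdW => i; rewrite mxE /b mxE.
    case: eqP => [->|/eqP ne]; first by rewrite subrr mulr0 addr0 subrr.
    by rewrite subr0 mulr1 add0r subr_ge0; exact: hc.
  have H2 : 0 <= Q (c *: (1%:M - alpha 1%:M)) u := psdP (psdZ c0 hI) u.
  have H3 : 0 <= Q (1%:M - a) u := psdP h1a u.
  rewrite linearB linearD linearZ linearB /= av in H1.
  rewrite !(QD, QN, QZ) in H1 H2 H3 *; rewrite Qvu in H1.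
  have h : 0 <= (1 - c) * (Q a u - Q 1%:M u).
    have -> : (1 - c) * (Q a u - Q 1%:M u) =
      (Q a u + c * (Q (alpha 1%:M) u - Q a u) - Q 1%:M u) + c * (Q 1%:M u - Q (alpha 1%:M) u) by ring.
    exact: addr_ge0 H1 H2.
  move: h; rewrite pmulr_rge0 ?subr_gt0 // => h.
  by apply/eqP; rewrite eq_le H3 andbT subr_le0 -subr_ge0.
have ap : (1%:M - a) *m p = 0.
  apply: cols0 => k; rewrite -mulmxA.
  exact: (psd_Q0 h1a (key (delta_mx k 0))).
have ap' : a *m p = p.
  by move/eqP: ap; rewrite mulmxBl mul1mx subr_eq0 => /eqP h; rewrite -h.
have pa : p *m a = p.
  by have := congr1 (@adjmx _ s s) ap'; rewrite adjmxM padj aadj.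
rewrite /mxle.
have -> : a - p = adjmx (1%:M - p) *m a *m (1%:M - p).
  rewrite adjmxB adjmx1 padj mulmxBl mul1mx pa mulmxBr mulmx1 mulmxBl ap' hpp.
  by rewrite subrr subr0.
exact: psd_conj (pos _ psdp).
Qed.


Unset Implicit Arguments.

Theorem proposition9p12 (R : rcfType) (s : nat)
    (alpha : {linear 'M[R[i]]_s -> 'M[R[i]]_s}) :
  completely_positive alpha ->
  mxle (alpha 1%:M) 1%:M ->
  (* (i) no projection p with 0 < p < I and alpha(p) >= p *)
  (forall p : 'M[R[i]]_s, is_projection p -> p <> 0 -> p <> 1%:M ->
     ~ mxle p (alpha p)) ->
  (* (ii) alpha^(n+1)(I) = alpha^n(I) =: v for some n, and (iii) v is positive definite *)
  (exists n : nat, iter n.+1 alpha 1%:M = iter n alpha 1%:M /\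
                   posdefmx (iter n alpha 1%:M)) ->
  alpha 1%:M = 1%:M.
Proof. exact: main_lemma. Qed.
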